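(* Let $\rho_X,\rho_Z\in(0,1/2)$ and let $C\sim\mathrm{CSS}_n(\rho_X,\rho_Z)$ be a random CSS code. For any constant $f\in(0,1)$, $$\Pr_C\big(B_C(f)\cap L_Z(C)\neq\emptyset\big)\le 2^{-n(\rho_X-6f)}$$ for all sufficiently large $n$.
   Context: $\mathrm{CSS}_n(\rho_X,\rho_Z)$ (with $\rho_Xn,\rho_Zn$ integers): choose $H_Z\in\mathbb{F}_2^{\rho_Zn\times n}$ uniformly at random, then $H_X\in\mathbb{F}_2^{\rho_Xn\times n}$ uniformly at random among matrices with $H_XH_Z^{\mathrm T}=0$; $C=(H_X,H_Z)$. $L_Z(C)=\ker H_X\setminus\mathrm{row}(H_Z)$ is the set of nontrivial logical $Z$ operators (as vectors in $\mathbb{F}_2^n$). Let $S_Z$ be the set of rows of $H_Z$. For $i\in[n]$, $Y_C^i=\{y\in\mathbb{F}_2^n:\exists s\in S_Z,\ y_j=s_j\ \forall j\le i,\ y_j=0\ \forall j>i\}$, and $Y_C=\bigcup_i Y_C^i$. The $Y$-weight $|w|_Y$ of $w\in\mathbb{F}_2^n$ is the minimum size of $S\subseteq Y_C$ with $w=\sum_{s\in S}s$. $B_C(f)=\{w\in\mathbb{F}_2^n:|w|_Y\le fn/\log n\}$. *)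

(* Defs.v *)
From HB Require Import structures.
From mathcomp Require Import all_boot all_order all_algebra.
From mathcomp Require Import reals exp.
Set Implicit Arguments. Unset Strict Implicit. Unset Printing Implicit Defensive.
Import Order.TTheory GRing.Theory Num.Theory.
Local Open Scope ring_scope.

Section CSS.
Variables (mX mZ n : nat).

Definition rowsZ (HZ : 'M['F_2]_(mZ, n)) : {set 'rV['F_2]_n} :=
  [set row i HZ | i : 'I_mZ].

(* Y_C = union over i in [n] of the length-i prefixes of rows of H_Z.
   With 0-based indices, the prefix up to (0-based) position i : 'I_n
   keeps coordinates j <= i, i.e. the first i+1 coordinates. *)
Definition Yset (HZ : 'M['F_2]_(mZ, n)) : {set 'rV['F_2]_n} :=
  [set y : 'rV['F_2]_n | [exists s in rowsZ HZ, [exists i : 'I_n,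
      [forall j : 'I_n, y 0 j == (if (j <= i)%N then s 0 j else 0)]]]].

Definition LZ (HX : 'M['F_2]_(mX, n)) (HZ : 'M['F_2]_(mZ, n)) : {set 'rV['F_2]_n} :=
  [set w | (HX *m w^T == 0) && ~~ (w <= HZ)%MS].

(* |w|_Y <= k : some S subset of Y_C with |S| <= k sums to w
   (i.e. the minimum defining the Y-weight exists and is <= k). *)
Definition Yweight_le (R : realType) (HZ : 'M['F_2]_(mZ, n)) (w : 'rV['F_2]_n) (k : R) : bool :=
  [exists S : {set 'rV['F_2]_n},
     [&& S \subset Yset HZ, (#|S|%:R <= k) & w == \sum_(s in S) s]].

Definition in_BC (R : realType) (f : R) (HZ : 'M['F_2]_(mZ, n)) (w : 'rV['F_2]_n) : bool :=
  Yweight_le HZ w (f * n%:R / (ln (n%:R : R) / ln 2)).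

Definition bad_event (R : realType) (f : R) (HX : 'M['F_2]_(mX, n)) (HZ : 'M['F_2]_(mZ, n)) : bool :=
  [exists w : 'rV['F_2]_n, (w \in LZ HX HZ) && in_BC f HZ w].

Definition orthX (HZ : 'M['F_2]_(mZ, n)) : {set 'M['F_2]_(mX, n)} :=
  [set HX | HX *m HZ^T == 0].

(* Pr over C ~ CSS_n : H_Z uniform, then H_X uniform in orthX H_Z *)
Definition Pr_bad (R : realType) (f : R) : R :=
  \sum_(HZ : 'M['F_2]_(mZ, n))
     (#|[set HX in orthX HZ | bad_event f HX HZ]|%:R / #|orthX HZ|%:R)
       / #|{: 'M['F_2]_(mZ, n)}|%:R.

End CSS.

(* Main.v *)
Require Import Defs.
From HB Require Import structures.
From mathcomp Require Import all_boot all_order all_algebra.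
From mathcomp Require Import reals exp.
Import Order.TTheory GRing.Theory Num.Theory.
Local Open Scope ring_scope.

Section Comb.
Variables mX mZ n : nat.
Local Notation F := 'F_2.

Lemma col_mul (m p q : nat) (A : 'M[F]_(m,p)) (B : 'M[F]_(p,q)) j :
  A *m col j B = col j (A *m B).
Proof. by apply/matrixP => i k; rewrite !mxE; apply: eq_bigr => l _; rewrite !mxE. Qed.

Lemma exists_dual (HZ : 'M[F]_(mZ,n)) (w : 'rV[F]_n) :
  ~~ (w <= HZ)%MS -> exists e : 'rV[F]_n, HZ *m e^T = 0 /\ e *m w^T = 1%:M.
Proof.
rewrite submxE => nz.
case: (pickP (fun j => (w *m cokermx HZ) 0 j != 0)) => [j Hj|H]; last first.
  case/eqP: nz; apply/matrixP => i j; rewrite (ord1 i) [RHS]mxE.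
  exact/eqP/negbFE/H.
set a := (w *m cokermx HZ) 0 j.
exists (a^-1 *: (col j (cokermx HZ))^T); split.
  by rewrite linearZ /= trmxK -scalemxAr col_mul mulmx_coker; apply/matrixP=> i k; rewrite !mxE mulr0.
rewrite -trmx1 -[e in e *m _]trmxK -trmx_mul; congr (_^T).
apply/matrixP => i k; rewrite (ord1 i) (ord1 k) linearZ /= trmxK -scalemxAr col_mul mxE.  rewrite [col _ _ _ _]mxE -/a mulVf // mxE.
by rewrite eqxx.
Qed.

Lemma card_ker (HZ : 'M[F]_(mZ,n)) (w : 'rV[F]_n) : ~~ (w <= HZ)%MS ->
  (#|[set HX in orthX mX HZ | HX *m w^T == 0%R]| * 2 ^ mX <= #|orthX mX HZ|)%N.
Proof.
move=> /exists_dual [e [He ew]].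
set A := [set HX in orthX mX HZ | HX *m w^T == 0].
have inj : {in setX A [set: 'cV[F]_mX] &, injective (fun p => p.1 + p.2 *m e)}.
  move=> [K1 v1] [K2 v2]; rewrite !inE /= => /andP[/andP[_ k1] _] /andP[/andP[_ k2] _] Heq.
  have := congr1 (mulmx^~ w^T) Heq; rewrite !mulmxDl -!mulmxA ew !mulmx1 (eqP k1) (eqP k2) !add0r => v12.
  by subst v2; congr pair; exact: (addIr _ Heq).
have := card_in_imset inj; rewrite cardsX cardsT card_mx card_Fp // muln1 => <-.
apply: subset_leq_card; apply/subsetP => x /imsetP [[K v]]; rewrite !inE /= => /andP[/andP[kin _] _] ->.
by rewrite mulmxDl (eqP kin) add0r -mulmxA -[e]trmxK -trmx_mul He trmx0 mulmx0.
Qed.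


Definition pre (HZ : 'M[F]_(mZ,n)) (p : 'I_mZ * 'I_n) : 'rV[F]_n :=
  \row_j (if (j <= p.2)%N then HZ p.1 j else 0).

Definition sumt K (HZ : 'M[F]_(mZ,n)) (t : K.-tuple (option ('I_mZ * 'I_n))) : 'rV[F]_n :=
  \sum_(x <- t) oapp (pre HZ) 0 x.
Arguments sumt {K}.

Lemma Yset_pre (HZ : 'M[F]_(mZ,n)) y : y \in Yset HZ -> exists p, y = pre HZ p.
Proof.
rewrite inE => /existsP [s /andP[/imsetP [r _ ->] /existsP [i /forallP H]]].
exists (r, i); apply/rowP => j; move/eqP: (H j) ->; rewrite !mxE.
by case: ifP => //; rewrite mxE.
Qed.

Lemma lift_seq (HZ : 'M[F]_(mZ,n)) (s : seq 'rV[F]_n) : all (mem (Yset HZ)) s ->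
  exists l, map (pre HZ) l = s.
Proof.
elim: s => [|y s IH] /=; first by exists [::].
case/andP => /Yset_pre [p ->] /IH [l <-]; by exists (p :: l).
Qed.

Lemma sum_tuple (HZ : 'M[F]_(mZ,n)) K (S : {set 'rV[F]_n}) : S \subset Yset HZ -> (#|S| <= K)%N ->
  exists t : K.-tuple _, \sum_(s in S) s = sumt HZ t.
Proof.
move=> sub cS.
have [l hl] : exists l, map (pre HZ) l = enum S.
  apply: lift_seq; apply/allP => y; rewrite mem_enum => yS; exact: (subsetP sub).
have szl : size l = #|S| by rewrite -(size_map (pre HZ)) hl cardE.
set l' := map Some l ++ nseq (K - size l) None.
have sz : size l' == K by rewrite size_cat size_map size_nseq szl subnKC.
exists (Tuple sz); rewrite /sumt /= big_cat /= big_map.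
rewrite [X in _ + X]big1_seq ?addr0; last by move=> x /andP[_]; rewrite mem_nseq => /andP[_ /eqP->].
by rewrite -(big_map (pre HZ) xpredT id) hl big_enum.
Qed.


Lemma card_W (R : realType) (f : R) (HZ : 'M[F]_(mZ,n)) K :
  (forall m : nat, m%:R <= f * n%:R / (ln (n%:R : R) / ln 2) -> (m <= K)%N) ->
  (#|[set w | ~~ (w <= HZ)%MS && in_BC f HZ w]| <= (mZ * n).+1 ^ K)%N.
Proof.
move=> hK.
apply: (@leq_trans #|[set sumt HZ t | t in {: K.-tuple (option ('I_mZ * 'I_n))}]|).
  apply: subset_leq_card; apply/subsetP => w; rewrite inE => /andP[_].
  rewrite /in_BC /Yweight_le => /existsP [S /and3P [sub cS /eqP ->]].
  have [t ->] := @sum_tuple HZ K S sub (hK _ cS).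
  by apply/imsetP; exists t.
by rewrite (leq_trans (leq_imset_card _ _)) // card_tuple card_option card_prod !card_ord.
Qed.

Lemma count_bad (R : realType) (f : R) (HZ : 'M[F]_(mZ,n)) K :
  (forall m : nat, m%:R <= f * n%:R / (ln (n%:R : R) / ln 2) -> (m <= K)%N) ->
  (#|[set HX in orthX mX HZ | bad_event f HX HZ]| * 2 ^ mX <= (mZ * n).+1 ^ K * #|orthX mX HZ|)%N.
Proof.
move=> hK.
set W := [set w | ~~ (w <= HZ)%MS && in_BC f HZ w].
have step1 : (#|[set HX in orthX mX HZ | bad_event f HX HZ]| <=
    \sum_(w in W) #|[set HX in orthX mX HZ | HX *m w^T == 0%R]|)%N.
  rewrite -sum1dep_card big_mkcondr /=.
  have e2 : \sum_(w in W) #|[set HX in orthX mX HZ | HX *m w^T == 0%R]| =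
     \sum_(w in W) \sum_(HX in orthX mX HZ) ((HX *m w^T == 0%R) : nat).
    apply: eq_bigr => w _.
    rewrite -(sum1dep_card (fun HX => (HX \in orthX mX HZ) && (HX *m w^T == 0%R))) big_mkcondr /=.
    by apply: eq_bigr => HX _; case: (_ == _).
  rewrite e2.
  rewrite exchange_big /=; apply: leq_sum => HX _.
  case: ifP => // /existsP [w /andP[]].
  rewrite inE => /andP[hx nsub] bc.
  have wW : w \in W by rewrite inE nsub bc.
  by rewrite (bigD1 w) //= hx.
apply: (leq_trans (leq_mul step1 (leqnn _))).
rewrite big_distrl /=.
apply: (@leq_trans (\sum_(w in W) #|orthX mX HZ|)).
  apply: leq_sum => w; rewrite inE => /andP[nsub _]; exact: card_ker.
by rewrite sum_nat_const leq_mul2r (@card_W R f HZ K hK) orbT.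
Qed.

End Comb.
Lemma natmul_div (R : realType) (x : R) (m : nat) : (0 < m)%N -> (x / m%:R) *+ m = x.
Proof. by move=> m0; rewrite -mulrnAr -(mulr_natr (m%:R)^-1) mulVf ?mulr1 // pnatr_eq0 -lt0n. Qed.

Lemma pr_le (R : realType) (f : R) mX mZ n K :
  (forall m : nat, m%:R <= f * n%:R / (ln (n%:R : R) / ln 2) -> (m <= K)%N) ->
  Pr_bad mX mZ n f <= ((mZ * n).+1 ^ K)%:R / (2 ^ mX)%:R.
Proof.
move=> hK; rewrite /Pr_bad.
set B := _ / _.
have cM : (0 < #|{: 'M['F_2]_(mZ, n)}|)%N by rewrite card_mx card_Fp // expn_gt0.
apply: (@le_trans _ _ (\sum_(HZ : 'M['F_2]_(mZ,n)) B / #|{: 'M['F_2]_(mZ, n)}|%:R)).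
  apply: ler_sum => HZ _; rewrite ler_pM2r ?invr_gt0 ?ltr0n //.
  have o0 : (0 < #|orthX mX HZ|)%N.
    by rewrite card_gt0; apply/set0Pn; exists 0; rewrite inE mul0mx.
  rewrite ler_pdivrMr ?ltr0n // /B mulrAC ler_pdivlMr ?ltr0n ?expn_gt0 // -!natrM ler_nat.
  exact: count_bad.
by rewrite sumr_const natmul_div.
Qed.

From mathcomp Require Import ring lra zify.

Lemma expn_mono a b e : (a <= b)%N -> (a ^ e <= b ^ e)%N.
Proof. by move=> ab; elim: e => // e IH; rewrite !expnS leq_mul. Qed.

Theorem lemma18 (R : realType) (rhoX rhoZ f : R) :
  0 < rhoX < 1 / 2 -> 0 < rhoZ < 1 / 2 -> 0 < f < 1 ->
  exists N : nat, forall n mX mZ : nat, (N <= n)%N ->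
    mX%:R = rhoX * n%:R -> mZ%:R = rhoZ * n%:R ->
    Pr_bad mX mZ n f <= 2 `^ (- (n%:R * (rhoX - 6 * f))).
Proof.
move=> /andP[rX0 rX1] /andP[rZ0 rZ1] /andP[f0 f1].
exists 2%N => n mX mZ n2 hX hZ.
have N1 : 1 < (n%:R : R) by rewrite ltr1n.
have l2 : 0 < ln (2 : R) by apply: ln_gt0; lra.
have lN : 0 < ln (n%:R : R) by apply: ln_gt0.
set Nn := (n%:R : R) in N1 lN hX hZ *.
set k := f * Nn / (ln Nn / ln 2).
have k0 : 0 <= k by rewrite /k; apply: divr_ge0; [apply: mulr_ge0|apply: divr_ge0]; apply: ltW => //; lra.
pose K := Num.truncn k.
have hK : forall m : nat, m%:R <= k -> (m <= K)%N by move=> m; rewrite truncn_ge_nat.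
apply: (le_trans (@pr_le R f mX mZ n K hK)).
have mZn : (mZ <= n)%N.
  rewrite -(ler_nat R) hZ -/Nn -[X in _ <= X]mul1r ler_wpM2r //; apply: ltW => //.
  by apply: (lt_trans rZ1); rewrite ltr_pdivrMr // mul1r ltr1n.
have cnt : ((mZ * n).+1 ^ K <= n ^ (3 * K))%N.
  rewrite mulnC expnM; apply: expn_mono.
  have : (mZ * n <= n * n)%N by rewrite leq_mul2r mZn orbT.
  rewrite (expnS n 2) expnS expn1 => h.
  have q1 : (0 < n * n)%N by rewrite muln_gt0 (leq_trans _ n2).
  have : (n * n * 2 <= n * (n * n))%N by rewrite mulnC leq_mul2r n2 orbT.
  move: h q1; set q := (n * n)%N; lia.
apply: (@le_trans _ _ ((n ^ (3 * K))%:R / (2 ^ mX)%:R)).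
  by rewrite ler_wpM2r ?invr_ge0 ?ler0n // ler_nat.
have KK : (3 * K)%:R <= 3 * k :> R.
  by rewrite natrM ler_wpM2l // truncn_le.
have e1 : ((n ^ (3 * K))%:R : R) <= Nn `^ (3 * k).
  by rewrite natrX -powR_mulrn ?ler0n // ler_powR // ltW.
have e2 : ((2 ^ mX)%:R : R) = 2 `^ (rhoX * Nn).
  by rewrite natrX -hX powR_mulrn.
rewrite e2; apply: (@le_trans _ _ (Nn `^ (3 * k) / 2 `^ (rhoX * Nn))).
  by rewrite ler_wpM2r // invr_ge0 powR_ge0.
have Nn0 : Nn != 0 by apply: lt0r_neq0; apply: lt_trans N1.
have t0 : (2 : R) != 0 by rewrite pnatr_eq0.
rewrite /powR (negbTE Nn0) (negbTE t0) -expRB ler_expR.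
have -> : 3 * k * ln Nn = 3 * (f * Nn * ln 2).
  rewrite /k; field. by rewrite ?(lt0r_neq0 lN) ?(lt0r_neq0 l2).
have hp : 0 < f * Nn * ln 2 by rewrite !mulr_gt0 // (lt_trans _ N1).
have -> : - (Nn * (rhoX - 6 * f)) * ln 2 = 6 * (f * Nn * ln 2) - rhoX * Nn * ln 2.
  by ring.
by rewrite lerD2r ler_pM2r // ler_nat.
Qed.
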